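(* Let $((A_i,B_i))_{i\in\mathbb N}$ be a strictly increasing sequence of oriented separations of a graph $G$ such that $G[B_i]$ is connected for every $i$, and let $\{C,D\}$ be a separation of $G$ of finite order. If the sequence is exhaustive (i.e. $\bigcap_iB_i=\emptyset$), then there is $I\in\mathbb N$ such that either $(C,D)\le(A_i,B_i)$ for all $i\ge I$, or $(D,C)\le(A_i,B_i)$ for all $i\ge I$.
   Context: A separation of $G$ is an unordered pair $\{A,B\}$ of subsets of $V(G)$ with $A\cup B=V(G)$ and no edge between $A\setminus B$ and $B\setminus A$; its order is $|A\cap B|$. Oriented separations are ordered by $(A,B)\le(C,D)$ iff $A\subseteq C$ and $B\supseteq D$. *)

(* Defs.v *)
From Stdlib Require Import List Arith.
Import ListNotations.

(* A graph is given by a vertex type V and an adjacency relation adj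
   (assumed symmetric and irreflexive in the theorem). Vertex sets are
   predicates V -> Prop. *)

Definition is_separation {V : Type} (adj : V -> V -> Prop) (A B : V -> Prop) : Prop :=
  (forall v, A v \/ B v) /\
  (forall u v, A u -> ~ B u -> B v -> ~ A v -> ~ adj u v).

Definition finite_set {V : Type} (S : V -> Prop) : Prop :=
  exists l : list V, forall v, S v -> In v l.

Definition finite_order {V : Type} (A B : V -> Prop) : Prop :=
  finite_set (fun v => A v /\ B v).

Definition sep_le {V : Type} (A B C D : V -> Prop) : Prop :=
  (forall v, A v -> C v) /\ (forall v, D v -> B v).

Definition sep_lt {V : Type} (A B C D : V -> Prop) : Prop :=
  sep_le A B C D /\ ~ sep_le C D A B.

Inductive walk_in {V : Type} (adj : V -> V -> Prop) (X : V -> Prop) : V -> V -> Prop :=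
| walk_refl : forall x, X x -> walk_in adj X x x
| walk_step : forall x y z, X x -> adj x y -> walk_in adj X y z -> walk_in adj X x z.

Definition induced_connected {V : Type} (adj : V -> V -> Prop) (X : V -> Prop) : Prop :=
  (exists x, X x) /\ (forall x y, X x -> X y -> walk_in adj X x y).

(* Main.v *)
Require Import Defs.
From Stdlib Require Import List Arith Lia Classical.

Lemma walk_start {V : Type} (adj : V -> V -> Prop) (X : V -> Prop) x y :
  walk_in adj X x y -> X x.
Proof. intros H; destruct H; auto. Qed.

Theorem mainTheorem9 (V : Type) (adj : V -> V -> Prop)
  (adj_sym : forall u v, adj u v -> adj v u)
  (adj_irrefl : forall v, ~ adj v v)
  (A B : nat -> V -> Prop)
  (hsep : forall i, is_separation adj (A i) (B i))
  (hinc : forall i, sep_lt (A i) (B i) (A (S i)) (B (S i)))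
  (hconn : forall i, induced_connected adj (B i))
  (C D : V -> Prop)
  (hCD : is_separation adj C D)
  (hfin : finite_order C D)
  (hexh : forall v, ~ (forall i, B i v)) :
  exists I : nat,
    (forall i, I <= i -> sep_le C D (A i) (B i)) \/
    (forall i, I <= i -> sep_le D C (A i) (B i)).
Proof.
  assert (mono : forall i j, i <= j -> forall v, B j v -> B i v).
  { intros i j Hij; induction Hij; intros v Hv; auto.
    apply IHHij. destruct (hinc m) as [[_ H] _]. auto. }
  destruct hfin as [l Hl].
  assert (HI : exists I, forall v, In v l -> forall j, I <= j -> ~ B j v).
  { clear Hl. induction l as [|a l IH].
    - exists 0. intros v [].
    - destruct IH as [I HI].
      destruct (not_all_ex_not _ _ (hexh a)) as [k Hk].
      exists (I + k). intros v [<-|Hv] j Hj Hb.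
      + apply Hk. apply (mono k j); auto; lia.
      + apply (HI v Hv j); auto; lia. }
  destruct HI as [I HI].
  assert (Hempty : forall v, B I v -> C v -> D v -> False).
  { intros v Hb Hc Hd. apply (HI v (Hl v (conj Hc Hd)) I (le_n I) Hb). }
  destruct hCD as [Hcov Hno].
  destruct (hconn I) as [[x Hx] Hw].
  assert (prop : forall (P Q : V -> Prop),
    (forall u v, P u -> ~ Q u -> Q v -> ~ P v -> ~ adj u v) ->
    (forall u v, Q u -> ~ P u -> P v -> ~ Q v -> ~ adj u v) ->
    (forall v, P v \/ Q v) ->
    (forall v, B I v -> P v -> Q v -> False) ->
    P x -> ~ Q x -> forall y, B I y -> P y /\ ~ Q y).
  { intros P Q N1 N2 Cov E Px Qx y Hy.
    pose proof (Hw x y Hx Hy) as W.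
    clear Hy. revert Px Qx. induction W as [z Hz|z y' w Hz Ha W IHW]; auto.
    intros Pz Qz.
    assert (By : B I y') by apply (walk_start _ _ _ _ W).
    destruct (Cov y') as [Py|Qy].
    - apply IHW; auto. intro Qy. apply (E y'); auto.
    - assert (~ P y') by (intro Py; apply (E y'); auto).
      exfalso. apply (N1 z y'); auto. }
  assert (Hsym : forall u v, D u -> ~ C u -> C v -> ~ D v -> ~ adj u v).
  { intros u v H1 H2 H3 H4 Ha. apply (Hno v u); auto. }
  exists I.
  destruct (Hcov x) as [Cx|Dx].
  - assert (nDx : ~ D x) by (intro; apply (Hempty x); auto).
    pose proof (prop C D Hno Hsym Hcov Hempty Cx nDx) as P.
    right. intros i Hi. split.
    + intros v Dv. destruct (proj1 (hsep i) v) as [Av|Bv]; auto.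
      exfalso. destruct (P v (mono I i Hi v Bv)); auto.
    + intros v Bv. apply (P v (mono I i Hi v Bv)).
  - assert (nCx : ~ C x) by (intro; apply (Hempty x); auto).
    pose proof (prop D C Hsym Hno (fun v => proj1 (or_comm (C v) (D v)) (Hcov v))
      (fun v b d c => Hempty v b c d) Dx nCx) as P.
    left. intros i Hi. split.
    + intros v Cv. destruct (proj1 (hsep i) v) as [Av|Bv]; auto.
      exfalso. destruct (P v (mono I i Hi v Bv)); auto.
    + intros v Bv. apply (P v (mono I i Hi v Bv)).
Qed.
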